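(* For each $1\le r\le q$, when $U_r$ is written in the $\mathbb{Z}$-basis $\{V_1,\dots,V_q\}$ of $\mathcal{R}_{kG}$, the coefficient of $V_r$ is $1$ and the coefficient of $V_s$ is $0$ for every $s>r$. Consequently $\{U_r: 1\le r\le q\}$ is a $\mathbb{Z}$-basis of $\mathcal{R}_{kG}$, and the change-of-basis matrix between $\{V_r\}$ and $\{U_r\}$ is unitriangular.
   Context: Let $p$ be a prime, $\alpha\ge 1$ an integer, $q=p^\alpha$, $G=C_q$ the cyclic group of order $q$ with generator $g$, and $k$ a field of characteristic $p$. The representation ring $\mathcal{R}_{kG}$ is the ring whose underlying abelian group is free on the isomorphism classes of indecomposable finite-dimensional $kG$-modules, with addition induced by direct sum and multiplication induced by $\otimes_k$ (diagonal action). For $1\le r\le q$ let $V_r=k[X]/(X^r)$ with $g$ acting as multiplication by $1+X$; these form a complete list of the pairwise non-isomorphic indecomposable $kG$-modules, hence a $\mathbb{Z}$-basis of $\mathcal{R}_{kG}$. Set $V_0=0$. For $0\le i<\alpha$ let $\chi_i=V_{p^i+1}-V_{p^i-1}$. The quantum numbers $[n]\in\mathbb{Z}[X]$ are defined by $[0]=0$, $[1]=1$, $[n]=X[n-1]-[n-2]$ for $n\ge2$, and $[n]_x$ denotes evaluation at $X=x$. For $1\le r\le q$, write $r-1=\sum_{i=0}^{\alpha-1}r_ip^i$ with $0\le r_i<p$, and set $U_r=\prod_{i=0}^{\alpha-1}[r_i+1]_{\chi_i}\in\mathcal{R}_{kG}$. *)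

(* Defs.v *)
(* Representation ring of C_q (q = p^alpha) over a field k of
   characteristic p, modelled concretely. *)
From HB Require Import structures.
From mathcomp Require Import all_boot all_order all_algebra.
From mathcomp Require Import mxtens.
Set Implicit Arguments. Unset Strict Implicit. Unset Printing Implicit Defensive.
Import Order.TTheory GRing.Theory Num.Theory.
Local Open Scope ring_scope.

Section RepRing.
Variable k : fieldType.

(* Matrix of the generator g on V_r = k[X]/(X^r), basis 1, X, ..., X^(r-1),
   acting on row vectors: g = 1 + X, i.e. X^i |-> X^i + X^(i+1). *)
Definition Vmx (r : nat) : 'M[k]_r :=
  \matrix_(i, j) ((i == j :> nat)%:R + (j == i.+1 :> nat)%:R).

(* Multiplicity of the indecomposable V_t (t >= 1) as a direct summand of the
   kG-module k^n on which g acts by the (unipotent) matrix g: the number of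
   Jordan blocks of size t of the nilpotent g - 1, i.e.
   rk N^(t-1) - 2 rk N^t + rk N^(t+1), with N = g - 1. *)
Definition multV {n : nat} (g : 'M[k]_n) (t : nat) : int :=
  let N := g - 1%:M in
  (\rank (N ^+ t.-1))%:Z - 2 * (\rank (N ^+ t))%:Z + (\rank (N ^+ t.+1))%:Z.

(* Elements of the representation ring R_kG: Z-combinations of V_1..V_q;
   coordinate i : 'I_q is the coefficient of V_(i+1). *)
Definition RR (q : nat) := {ffun 'I_q -> int}.

(* basis element V_r (V_0 = 0, and V_r = 0 for r > q which never occurs) *)
Definition Vb (q r : nat) : RR q := [ffun i : 'I_q => ((i.+1 == r) : nat)%:Z].

(* V_r * V_s = class of V_r (x) V_s (diagonal action: g acts as g (x) g). *)
Definition Vprod (q r s : nat) : RR q :=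
  [ffun t : 'I_q => multV (tensmx (Vmx r) (Vmx s)) t.+1].

Definition mulRR (q : nat) (a b : RR q) : RR q :=
  \sum_(r < q) \sum_(s < q) Vprod q r.+1 s.+1 *~ (a r * b s).

Definition oneRR (q : nat) : RR q := Vb q 1.

Definition expRR (q : nat) (x : RR q) (n : nat) : RR q :=
  iter n (mulRR x) (oneRR q).

Definition evalRR (q : nat) (P : {poly int}) (x : RR q) : RR q :=
  \sum_(i < size P) expRR x i *~ P`_i.

End RepRing.

(* quantum numbers [n] in Z[X]: [0]=0, [1]=1, [n]=X[n-1]-[n-2] *)
Fixpoint qnum_pair (n : nat) : {poly int} * {poly int} :=
  match n with
  | 0 => (0, 1)
  | n'.+1 => let pr := qnum_pair n' in (pr.2, 'X * pr.2 - pr.1)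
  end.
Definition qnum (n : nat) : {poly int} := (qnum_pair n).1.

Definition chi (q p i : nat) : RR q := Vb q (p ^ i).+1 - Vb q (p ^ i).-1.

Definition digit (p r i : nat) : nat := ((r.-1 %/ p ^ i) %% p)%N.

Definition Ur (k : fieldType) (p alpha r : nat) : RR (p ^ alpha) :=
  \big[@mulRR k (p ^ alpha)/oneRR (p ^ alpha)]_(i < alpha)
     evalRR k (qnum (digit p r i).+1) (chi (p ^ alpha) p i).

(* Main.v *)
Require Import Defs.
From HB Require Import structures.
From mathcomp Require Import all_boot all_order all_algebra.
From mathcomp Require Import mxtens zify.
Import GRing.Theory.
Local Open Scope ring_scope.

Module Aux.
Set Implicit Arguments. Unset Strict Implicit. Unset Printing Implicit Defensive.

Section Mx.
Variable k : fieldType.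

Definition Sh n : 'M[k]_n := \matrix_(i, j) (j == i.+1 :> nat)%:R.

Lemma VmxE n : Vmx k n = 1%:M + Sh n.
Proof. by apply/matrixP => i j; rewrite !mxE. Qed.

Lemma ShX n j : Sh n ^+ j = \matrix_(i, l) (l == (i + j)%N :> nat)%:R.
Proof.
elim: j => [|j IH].
  by apply/matrixP => i l; rewrite expr0 !mxE addn0 eq_sym.
apply/matrixP => i l; rewrite exprSr IH -mulmxE !mxE.
have [lt|ge] := ltnP (i + j) n.
  rewrite (bigD1 (Ordinal lt)) //= big1 ?addr0.
    by rewrite !mxE eqxx mul1r addnS.
  move=> m /eqP ne; rewrite !mxE.
  case: eqP => [e|]; last by rewrite mul0r.
  by case: ne; apply: val_inj.
rewrite big1.
  have : (l < n)%N by [].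
  by case: eqP => // ->; rewrite addnS ltnNge (leq_trans ge) ?leqnSn.
move=> m _; rewrite !mxE; case: eqP => [e|]; last by rewrite mul0r.
by have := ltn_ord m; rewrite e ltnNge ge.
Qed.

Lemma ShX0 n j : (n <= j)%N -> Sh n ^+ j = 0.
Proof.
move=> le; rewrite ShX; apply/matrixP => i l; rewrite !mxE.
case: eqP => // e; have := ltn_ord l; rewrite e ltnNge.
by rewrite (leq_trans le) // leq_addl.
Qed.

Lemma ShXmax a : Sh a.+1 ^+ a = delta_mx ord0 ord_max.
Proof.
rewrite ShX; apply/matrixP => i l; rewrite !mxE.
case: (eqVneq i ord0) => [->|ne] /=.
  by rewrite add0n.
have : (0 < i)%N by rewrite lt0n; apply: contra ne => /eqP e; apply/eqP/val_inj.
move=> ip; case: eqP => // e; have := ltn_ord l; rewrite e.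
by move=> h; exfalso; lia.
Qed.

Lemma tensDl m n p q (A1 A2 : 'M[k]_(m, n)) (B : 'M[k]_(p, q)) :
  (A1 + A2) *t B = A1 *t B + A2 *t B.
Proof. by apply/matrixP => i j; rewrite !mxE mulrDl. Qed.

Lemma tensDr m n p q (A : 'M[k]_(m, n)) (B1 B2 : 'M[k]_(p, q)) :
  A *t (B1 + B2) = A *t B1 + A *t B2.
Proof. by apply/matrixP => i j; rewrite !mxE mulrDr. Qed.

Lemma tens11 m n : (1%:M : 'M[k]_m) *t (1%:M : 'M[k]_n) = 1%:M.
Proof.
apply/matrixP => i j.
case: (mxtens_indexP i) => i0 i1; case: (mxtens_indexP j) => j0 j1.
rewrite tensmxE !mxE (inj_eq (can_inj (@mxtens_indexK _ _))) xpair_eqE.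
by rewrite -natrM mulnb.
Qed.


Section Tens.
Variables a b : nat.
Local Notation M := ('M[k]_(a.+1 * b.+1)).

Definition Xm : M := Sh a.+1 *t 1%:M.
Definition Ym : M := 1%:M *t Sh b.+1.
Definition Nm : M := Vmx k a.+1 *t Vmx k b.+1 - 1%:M.

Lemma XYE i j : Xm ^+ i * Ym ^+ j = Sh a.+1 ^+ i *t Sh b.+1 ^+ j.
Proof.
have XE : forall m, Xm ^+ m = Sh a.+1 ^+ m *t 1%:M.
  elim=> [|m IH]; first by rewrite !expr0 tens11.
  by rewrite !exprSr IH /Xm -!mulmxE tensmx_mul mulmx1.
have YE : forall m, Ym ^+ m = 1%:M *t Sh b.+1 ^+ m.
  elim=> [|m IH]; first by rewrite !expr0 tens11.
  by rewrite !exprSr IH /Ym -!mulmxE tensmx_mul mulmx1.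
by rewrite XE YE -mulmxE tensmx_mul mulmx1 mul1mx.
Qed.

Lemma commXY : GRing.comm Xm Ym.
Proof.
rewrite /GRing.comm -[Xm]expr1 -[Ym]expr1 XYE.
by rewrite /Xm /Ym -mulmxE tensmx_mul mulmx1 mul1mx.
Qed.

Lemma NE : Nm = Xm + Ym * (1 + Xm).
Proof.
rewrite /Nm !VmxE tensDl !tensDr tens11.
have -> : Sh a.+1 *t Sh b.+1 = Ym * Xm.
  by rewrite -commXY -[Xm]expr1 -[Ym]expr1 XYE !expr1.
rewrite -/Xm -/Ym mulrDr mulr1.
by rewrite [_ - _]addrC !addrA addNr add0r [Ym + Xm]addrC -addrA.
Qed.

Lemma Npow n : Nm ^+ n =
  \sum_(i < n.+1) ((Sh a.+1 ^+ (n - i) *t Sh b.+1 ^+ i) * (1 + Xm) ^+ i) *+ 'C(n, i).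
Proof.
have c1 : GRing.comm Xm (1 + Xm) by apply: commrD; [apply: commr1|apply: commr_refl].
have c2 : GRing.comm Ym (1 + Xm).
  by apply: commrD; [apply: commr1|apply: commr_sym; apply: commXY].
rewrite NE exprDn_comm; last by apply: commrM; [apply: commXY|].
apply: eq_bigr => i _; rewrite exprMn_comm // mulrA XYE //.
Qed.

Lemma Npow0 n : (a + b < n)%N -> Nm ^+ n = 0.
Proof.
move=> lt; rewrite Npow big1 // => i _.
have [lb|gb] := ltnP b i.
  by rewrite (@ShX0 b.+1 i lb) tensmx0 mul0r mul0rn.
rewrite (@ShX0 a.+1 (n - i)%N) ?tens0mx ?mul0r ?mul0rn //.
have := ltn_ord i; lia.
Qed.

Lemma Wfix m : (Sh a.+1 ^+ a *t Sh b.+1 ^+ b) * (1 + Xm) ^+ m = Sh a.+1 ^+ a *t Sh b.+1 ^+ b.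
Proof.
elim: m => [|m IH]; first by rewrite expr0 mulr1.
rewrite exprSr mulrA IH mulrDr mulr1 /Xm -mulmxE tensmx_mul mulmx1.
by rewrite mulmxE -exprSr (@ShX0 a.+1 a.+1) // tens0mx addr0.
Qed.

Lemma NpowTop : Nm ^+ (a + b) = (Sh a.+1 ^+ a *t Sh b.+1 ^+ b) *+ 'C(a + b, b).
Proof.
have lt : (b < (a + b).+1)%N by lia.
rewrite Npow (bigD1 (Ordinal lt)) //= big1 ?addr0.
  by rewrite addnK Wfix.
move=> i /eqP ne.
have [lb|gb] := ltnP b i.
  by rewrite (@ShX0 b.+1 i lb) tensmx0 mul0r mul0rn.
have ne' : (i : nat) <> b by move=> e; apply: ne; apply: val_inj.
rewrite (@ShX0 a.+1 (a + b - i)%N) ?tens0mx ?mul0r ?mul0rn //.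
lia.
Qed.

Lemma rankTop : 'C(a + b, b)%:R != 0 :> k -> \rank (Nm ^+ (a + b)) = 1%N.
Proof.
move=> nz; rewrite NpowTop -scaler_nat (eqmx_scale _ nz).
have -> : Sh a.+1 ^+ a *t Sh b.+1 ^+ b =
   delta_mx (mxtens_index (ord0, ord0)) (mxtens_index (ord_max, ord_max)).
  rewrite !ShXmax; apply/matrixP => i j.
  case: (mxtens_indexP i) => i0 i1; case: (mxtens_indexP j) => j0 j1.
  rewrite tensmxE !mxE !(inj_eq (can_inj (@mxtens_indexK _ _))) !xpair_eqE.
  by rewrite -natrM mulnb andbACA.
exact: mxrank_delta.
Qed.

End Tens.
End Mx.

Section RRs.
Variable k : fieldType.

Lemma Vprod0 q a b (t : 'I_q) : (a + b < t)%N -> Vprod k q a.+1 b.+1 t = 0.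
Proof.
move=> lt; rewrite ffunE /multV /=.
rewrite -/(Nm k a b) !Npow0 ?mxrank0 //; lia.
Qed.

Lemma Vprod1 q a b (t : 'I_q) : t = (a + b)%N :> nat ->
  'C(a + b, b)%:R != 0 :> k -> Vprod k q a.+1 b.+1 t = 1.
Proof.
move=> e nz; rewrite ffunE /multV /= e.
rewrite -/(Nm k a b) rankTop // !Npow0 ?mxrank0 //; lia.
Qed.
End RRs.

Section Bin.
Variables (k : fieldType) (p : nat).
Hypothesis pk : p \in [pchar k].

Lemma coefX1 n i : (('X + 1 : {poly k}) ^+ n)`_i = 'C(n, i)%:R.
Proof.
rewrite exprD1n coef_sum.
have [le|gt] := leqP i n.
  rewrite (bigD1 (Ordinal (le : (i < n.+1)%N))) //= big1 ?addr0.
    by rewrite coefMn coefXn eqxx.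
  move=> l /eqP ne; rewrite coefMn coefXn.
  by case: eqP => [e|]; [case: ne; apply: val_inj|rewrite mul0rn].
rewrite bin_small // big1 // => l _; rewrite coefMn coefXn.
by case: eqP => [e|]; [have := ltn_ord l; rewrite -e; lia|rewrite mul0rn].
Qed.

Lemma frob j : ('X + 1 : {poly k}) ^+ (p ^ j) = 'X^(p ^ j) + 1.
Proof.
have pP : p \in [pchar {poly k}] by rewrite pchar_poly.
elim: j => [|j IH]; first by rewrite expn0 !expr1.
rewrite expnSr exprM IH.
have := pFrobenius_autD_comm pP (commr1 ('X^(p ^ j))).
rewrite !pFrobenius_autE expr1n => ->.
by rewrite -exprM.
Qed.

Lemma comp_exp (P R : {poly k}) n : (P ^+ n) \Po R = (P \Po R) ^+ n.
Proof.
elim: n => [|n IH]; first by rewrite !expr0 -polyC1 comp_polyC.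
by rewrite !exprS comp_polyM IH.
Qed.

Lemma X1pow c j : ('X + 1 : {poly k}) ^+ (c * p ^ j) = (('X + 1) ^+ c) \Po 'X^(p ^ j).
Proof.
rewrite mulnC exprM frob comp_exp comp_polyD comp_polyX -polyC1 comp_polyC.
by rewrite polyC1.
Qed.

Lemma pgt0 : (0 < p)%N.
Proof. by rewrite prime_gt0 // (pcharf_prime pk). Qed.

Lemma binj c d j : 'C(c * p ^ j, d * p ^ j)%:R = 'C(c, d)%:R :> k.
Proof.
have pj : (0 < p ^ j)%N by rewrite expn_gt0 pgt0.
rewrite -coefX1 X1pow coef_comp_poly_Xn // dvdn_mull // mulnK //.
by rewrite coefX1.
Qed.

Lemma binL u M : (u < p)%N -> 'C(u + p * M, u)%:R = 1 :> k.
Proof.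
move=> up.
rewrite -coefX1 exprD -(expn1 p) mulnC X1pow coefM big_ord_recr /= subnn.
rewrite coef_comp_poly_Xn ?expn1 ?pgt0 // dvdn0 div0n !coefX1 binn bin0 mulr1.
rewrite big1 ?add0r // => l _.
rewrite coef_comp_poly_Xn ?pgt0 //.
have l_lt := ltn_ord l.
rewrite gtnNdvd ?mulr0 //; lia.
Qed.

Lemma binS_nz n : (n.+1 < p)%N -> 'C(n.+1, n)%:R != 0 :> k.
Proof.
move=> lt; rewrite binSn -(dvdn_pcharf pk) gtnNdvd //.
Qed.

End Bin.

Section RRl.
Variables (k : fieldType) (q : nat).

Definition topb m (x : RR q) := forall t : 'I_q, (m < t)%N -> x t = 0.
Definition lead m (x : RR q) := topb m x /\ forall t : 'I_q, t = m :> nat -> x t = 1.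

Lemma mul_top a b x y : topb a x -> topb b y -> topb (a + b) (mulRR k x y).
Proof.
move=> hx hy t lt; rewrite /mulRR sum_ffunE big1 // => r _.
rewrite sum_ffunE big1 // => s _; rewrite ffunMzE.
have [ar|ra] := ltnP a r; first by rewrite hx // mul0r mulr0z.
have [bs|sb] := ltnP b s; first by rewrite (hy s) // mulr0 mulr0z.
rewrite Vprod0 ?mul0rz //; lia.
Qed.

Lemma mul_lead a b x y : (a + b < q)%N -> 'C(a + b, b)%:R != 0 :> k ->
  lead a x -> lead b y -> lead (a + b) (mulRR k x y).
Proof.
move=> lt nz [tx hx] [ty hy]; split; first exact: mul_top.
move=> t e; rewrite /mulRR sum_ffunE.
have aq : (a < q)%N by lia.
have bq : (b < q)%N by lia.
rewrite (bigD1 (Ordinal aq)) //= [X in _ + X]big1 ?addr0; last first.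
  move=> r /eqP ne; rewrite sum_ffunE big1 // => s _; rewrite ffunMzE.
  have [ar|ra] := ltnP a r; first by rewrite tx // mul0r mulr0z.
  have [bs|sb] := ltnP b s; first by rewrite (ty s) // mulr0 mulr0z.
  have ne' : (r : nat) <> a by move=> h; apply: ne; apply: val_inj.
  rewrite Vprod0 ?mul0rz //; lia.
rewrite sum_ffunE (bigD1 (Ordinal bq)) //= [X in _ + X]big1 ?addr0; last first.
  move=> s /eqP ne; rewrite ffunMzE.
  have [bs|sb] := ltnP b s; first by rewrite (ty s) // mulr0 mulr0z.
  have ne' : (s : nat) <> b by move=> h; apply: ne; apply: val_inj.
  rewrite Vprod0 ?mul0rz //; lia.
by rewrite ffunMzE (hx (Ordinal aq)) // (hy (Ordinal bq)) // mulr1 Vprod1.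
Qed.

Lemma topbW m n x : (m <= n)%N -> topb m x -> topb n x.
Proof. by move=> le h t lt; apply: h; lia. Qed.

Lemma one_lead : (0 < q)%N -> lead 0 (oneRR q).
Proof.
move=> q0; split => t; rewrite ffunE.
  by case: t => [[|t]] //.
by move=> /= ->.
Qed.

End RRl.

Lemma qnumSS n : qnum n.+2 = 'X * qnum n.+1 - qnum n.
Proof. by []. Qed.

Lemma qnum_prop n : (size (qnum n) <= n)%N /\ (size (qnum n.+1) <= n.+1)%N /\
   (qnum n.+1)`_n = 1.
Proof.
elim: n => [|n [h0 [h1 h2]]].
  have -> : qnum 0 = 0 by [].
  have -> : qnum 1 = 1 by [].
  by rewrite size_poly0 size_poly1 coefC.
split=> //; split.
  apply/leq_sizeP => i le; rewrite qnumSS coefB coefXM.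
  case: eqP => [|_]; first lia.
  rewrite (leq_sizeP _ _ h1); last lia.
  by rewrite (leq_sizeP _ _ h0) ?subr0 //; lia.
by rewrite qnumSS coefB coefXM /= h2 (leq_sizeP _ _ h0) ?subr0 //.
Qed.

Lemma qnum_size n : size (qnum n.+1) = n.+1.
Proof.
have [_ [h1 h2]] := qnum_prop n.
apply/eqP; rewrite eqn_leq h1 /=; rewrite ltnNge; apply/negP => le.
by have := leq_sizeP _ _ le n (leqnn n); rewrite h2 => /eqP; rewrite oner_eq0.
Qed.

Section Ev.
Variables (k : fieldType) (q p j : nat).
Hypothesis pk : p \in [pchar k].
Hypothesis pq : (p ^ j.+1 <= q)%N.

Let p0 : (0 < p)%N := pgt0 pk.
Let pj0 : (0 < p ^ j)%N. Proof. by rewrite expn_gt0 p0. Qed.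
Let p1 : (1 < p)%N. Proof. exact: prime_gt1 (pcharf_prime pk). Qed.

Lemma chi_lead : lead (p ^ j) (chi q p j).
Proof.
split=> t; rewrite /chi !ffunE.
  move=> lt; case: eqP => [e|_]; first lia.
  by case: eqP => [e|_] //; lia.
move=> ->; rewrite eqxx; case: eqP => [e|_]; first lia.
by rewrite subr0.
Qed.

Lemma exp_lead n : (n < p)%N -> lead (n * p ^ j) (expRR k (chi q p j) n).
Proof.
elim: n => [|n IH] lt.
  by apply: one_lead; have := expn_gt0 p j.+1; rewrite p0 /=; lia.
have -> : expRR k (chi q p j) n.+1 = mulRR k (chi q p j) (expRR k (chi q p j) n) by [].
rewrite mulSn; apply: mul_lead; first 2 last.
- exact: chi_lead.
- by apply: IH; lia.
- have := pq; rewrite expnS => pq'.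
  have : (n.+1 * p ^ j < p * p ^ j)%N by rewrite ltn_pmul2r.
  lia.
- by rewrite -mulSn (binj pk) (binS_nz pk).
Qed.

Lemma eval_lead n : (n < p)%N -> lead (n * p ^ j) (evalRR k (qnum n.+1) (chi q p j)).
Proof.
move=> lt; have [_ [_ hc]] := qnum_prop n.
rewrite /evalRR; move: (qnum_size n) hc; set P := qnum n.+1 => sz hc.
rewrite sz; split.
  move=> t ht; rewrite sum_ffunE big1 // => i _; rewrite ffunMzE.
  have ip : (i < p)%N by have := ltn_ord i; lia.
  have [tp _] := exp_lead ip.
  rewrite tp ?mul0rz //.
  have : (i * p ^ j <= n * p ^ j)%N by rewrite leq_pmul2r // -ltnS.
  lia.
move=> t ht; rewrite sum_ffunE big_ord_recr /= big1 ?add0r.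
  have [_ h] := exp_lead lt; by rewrite ffunMzE h // hc.
move=> i _; rewrite ffunMzE.
have ip : (i < p)%N by have := ltn_ord i; lia.
have [tp _] := exp_lead ip.
rewrite tp ?mul0rz //.
have : (i * p ^ j < n * p ^ j)%N by rewrite ltn_pmul2r.
lia.
Qed.

End Ev.

Lemma digits_sum p n r : (\sum_(i < n) ((r %/ p ^ i) %% p) * p ^ i = r %% p ^ n)%N.
Proof.
elim: n => [|n IH]; first by rewrite big_ord0 expn0 modn1.
rewrite big_ord_recr /= IH modn_divl -expnS.
rewrite -(modn_dvdm r (dvdn_exp2l p (leqnSn n))).
by rewrite addnC -divn_eq.
Qed.

Section Fold.
Variables (k : fieldType) (p alpha : nat) (d : nat -> nat).
Hypothesis pk : p \in [pchar k].
Hypothesis dp : forall i, (d i < p)%N.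
Local Notation q := (p ^ alpha)%N.

Let p0 : (0 < p)%N := pgt0 pk.

Definition Fd i := evalRR k (qnum (d i).+1) (chi q p i).

Lemma sum_bound n j : (\sum_(i < n) d (j + i) * p ^ (j + i) + p ^ j <= p ^ (j + n))%N.
Proof.
elim: n j => [|n IH] j; first by rewrite big_ord0 add0n addn0.
rewrite big_ord_recl /=.
have E : (\sum_(i < n) d (j + lift ord0 i) * p ^ (j + lift ord0 i) =
         \sum_(i < n) d (j.+1 + i) * p ^ (j.+1 + i))%N.
  by apply: eq_bigr => i _; rewrite /= /bump /= addnS.
rewrite E; have := IH j.+1; rewrite addSn -addnS.
have : (d j * p ^ j + p ^ j <= p ^ j.+1)%N.
  by rewrite addnC -mulSn expnS leq_mul2r dp orbT.
rewrite addn0; lia.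
Qed.

Lemma fold_lead n j : (j + n <= alpha)%N ->
  lead (\sum_(i < n) d (j + i) * p ^ (j + i))%N
       (\big[@mulRR k q/oneRR q]_(i < n) Fd (j + i)).
Proof.
elim: n j => [|n IH] j le.
  rewrite !big_ord0; apply: one_lead; by rewrite expn_gt0 p0.
rewrite !big_ord_recl /=.
have E : (\sum_(i < n) d (j + lift ord0 i) * p ^ (j + lift ord0 i) =
         \sum_(i < n) d (j.+1 + i) * p ^ (j.+1 + i))%N.
  by apply: eq_bigr => i _; rewrite /= /bump /= addnS.
have E2 : \big[@mulRR k q/oneRR q]_(i < n) Fd (j + lift ord0 i) =
          \big[@mulRR k q/oneRR q]_(i < n) Fd (j.+1 + i).
  by apply: eq_bigr => i _; rewrite /= /bump /= addnS.
rewrite E E2 addn0.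
set b := (\sum_(i < n) _)%N.
have bd : (p ^ j.+1 %| b)%N.
  apply: dvdn_sum => i _; apply: dvdn_mull; apply: dvdn_exp2l; lia.
have [M eM] := dvdnP bd.
apply: mul_lead.
- have := sum_bound n j.+1; rewrite -/b.
  have : (d j * p ^ j + p ^ j <= p ^ j.+1)%N.
    by rewrite addnC -mulSn expnS leq_mul2r dp orbT.
  have : (p ^ (j.+1 + n) <= p ^ alpha)%N by rewrite leq_exp2l ?prime_gt1 ?(pcharf_prime pk) //; lia.
  have : (0 < p ^ j)%N by rewrite expn_gt0 p0.
  lia.
- have -> : (d j * p ^ j + b = (d j + p * M) * p ^ j)%N.
    by rewrite eM expnS mulnDl mulnA [(M * p)%N]mulnC.
  rewrite -bin_sub; last by rewrite eM expnS mulnDl mulnA [(M * p)%N]mulnC leq_addl.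
  have -> : ((d j + p * M) * p ^ j - b = d j * p ^ j)%N.
    by rewrite eM expnS mulnDl mulnA [(M * p)%N]mulnC addnK.
  by rewrite (binj pk) (binL pk) ?oner_neq0.
- apply: eval_lead => //; rewrite leq_exp2l ?prime_gt1 ?(pcharf_prime pk) //; lia.
- by apply: IH; lia.
Qed.

End Fold.
Lemma Ur_lead (k : fieldType) (p alpha : nat) : p \in [pchar k] ->
  forall r : 'I_(p ^ alpha), lead (r : nat) (Ur k p alpha r.+1).
Proof.
move=> pk r.
have p0 := pgt0 pk.
have dp : forall i, (digit p r.+1 i < p)%N by move=> i; rewrite /digit ltn_pmod.
have := fold_lead pk dp (leqnn alpha : (0 + alpha <= alpha)%N).
have -> : (\sum_(i < alpha) digit p r.+1 (0 + i) * p ^ (0 + i))%N = r.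
  rewrite (eq_bigr (fun i : 'I_alpha => (r %/ p ^ i) %% p * p ^ i)%N).
    by rewrite digits_sum modn_small.
  by move=> i _; rewrite add0n.
have -> : \big[@mulRR k (p ^ alpha)/oneRR (p ^ alpha)]_(i < alpha) Fd k p alpha (digit p r.+1) (0 + i)
   = Ur k p alpha r.+1.
  by apply: eq_bigr => i _; rewrite add0n.
by [].
Qed.


End Aux.
Import Aux.

Theorem mainTheorem7 (k : fieldType) (p alpha : nat) :
  prime p -> (0 < alpha)%N -> p \in [pchar k] ->
  (forall r : 'I_(p ^ alpha),
      Ur k p alpha r.+1 r = 1 /\
      (forall s : 'I_(p ^ alpha), (r < s)%N -> Ur k p alpha r.+1 s = 0)) /\
  (forall x : RR (p ^ alpha),
      exists! c : {ffun 'I_(p ^ alpha) -> int},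
        x = \sum_(r < p ^ alpha) Ur k p alpha r.+1 *~ c r).
Proof.
move=> pP a0 pk.
have L := @Ur_lead k p alpha pk.
split.
  by move=> r; have [h1 h2] := L r; split; [exact: (h2 r erefl)|exact: h1].
set q := (p ^ alpha)%N.
pose Mx : 'M[int]_q := \matrix_(r, s) Ur k p alpha r.+1 s.
have trig : is_trig_mx Mx.
  apply/is_trig_mxP => i j lt; rewrite mxE; by have [h _] := L i; apply: h.
have uM : Mx \in unitmx.
  rewrite unitmxE det_trig // big1 ?unitr1 // => i _.
  by rewrite mxE; have [_ h] := L i; apply: h.
have key : forall (c : {ffun 'I_q -> int}) (x : RR q),
    (x = \sum_(r < q) Ur k p alpha r.+1 *~ c r) <->
    (\row_s x s = \row_r c r *m Mx).
  move=> c x; split.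
    move=> ->; apply/rowP => s; rewrite !mxE sum_ffunE.
    by apply: eq_bigr => r _; rewrite ffunMzE mulrzz !mxE mulrC.
  move=> h; apply/ffunP => s; have := congr1 (fun m : 'M[int]_(1, q) => m 0 s) h.
  rewrite !mxE sum_ffunE => ->.
  by apply: eq_bigr => r _; rewrite ffunMzE mulrzz !mxE mulrC.
move=> x.
exists [ffun r => (\row_s x s *m invmx Mx) 0 r]; split.
  apply/key.
  have -> : \row_r [ffun r => (\row_s x s *m invmx Mx) 0 r] r = \row_s x s *m invmx Mx.
    by apply/rowP => r; rewrite mxE ffunE.
  by rewrite mulmxKV.
move=> c /key h; apply/ffunP => r; rewrite ffunE h mulmxK //.
by rewrite mxE.
Qed.
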